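(* The following five definitions produce the same integer sequence, i.e. $a_n=b_n=c_n=d_n=e_n$ for all $n\ge 1$ (in particular each of these sequences is well defined): <ul> <li>$(a_n)_{n\ge1}$ is defined by $a_1=1$ and, for $n\ge 2$: $a_n=a_{n-1}+2$ if $n$ is in the sequence; $a_n=a_{n-1}+2$ if neither $n$ nor $n-1$ is in the sequence; $a_n=a_{n-1}+3$ if $n$ is not in the sequence but $n-1$ is in the sequence.</li> <li>$(b_n)_{n\ge1}$ is defined by $b_1=1$ and, for $n\ge 2$: $b_n=b_{n-1}+2$ if $n-1$ is not in the sequence; $b_n=b_{n-1}+3$ if $n-1$ is in the sequence.</li> <li>$c_n$ is the position of the $n$-th letter $0$ in the fixed point of the morphism $\phi$ on $\{0,1\}^*$ given by $\phi(0)=011$, $\phi(1)=01$.</li> <li>$d_n=\left\lfloor (1+\sqrt{2})\, n-\tfrac12\sqrt{2}\right\rfloor$ for $n\ge1$.</li> <li>$e_n=\lfloor r_n+\tfrac12\rfloor$, where $r_1=\tfrac{4}{\pi}$ and $r_{n+1}=\dfrac{n^2}{r_n-(2n-1)}$ for $n\ge1$.</li> </ul>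
   Context: In the definitions of $(a_n)$ and $(b_n)$, ''$m$ is in the sequence'' means that $m$ equals some term of that same sequence (the definitions are self-referential but determine the sequence recursively). The fixed point of $\phi$ is the infinite word $\lim_{k\to\infty}\phi^k(0)=0110101011010\cdots$ beginning with $0$; positions in this infinite word are numbered starting from $1$. *)

(* Defs.v *)
From Stdlib Require Import Reals ZArith Arith List.
Import ListNotations.
Open Scope R_scope.

Definition inseq (f : nat -> Z) (m : Z) : Prop :=
  exists k : nat, (1 <= k)%nat /\ f k = m.

Definition a_rec (f : nat -> Z) : Prop :=
  f 1%nat = 1%Z /\
  forall n : nat, (2 <= n)%nat ->
    let N := Z.of_nat n in
    (inseq f N -> f n = (f (n - 1)%nat + 2)%Z) /\
    (~ inseq f N /\ ~ inseq f (N - 1)%Z -> f n = (f (n - 1)%nat + 2)%Z) /\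
    (~ inseq f N /\ inseq f (N - 1)%Z -> f n = (f (n - 1)%nat + 3)%Z).

Definition b_rec (f : nat -> Z) : Prop :=
  f 1%nat = 1%Z /\
  forall n : nat, (2 <= n)%nat ->
    let N := Z.of_nat n in
    (~ inseq f (N - 1)%Z -> f n = (f (n - 1)%nat + 2)%Z) /\
    (inseq f (N - 1)%Z -> f n = (f (n - 1)%nat + 3)%Z).

Definition phi_letter (x : nat) : list nat :=
  match x with 0%nat => [0; 1; 1]%nat | _ => [0; 1]%nat end.
Definition phi (w : list nat) : list nat := flat_map phi_letter w.
Definition phik (k : nat) : list nat := Nat.iter k phi [0%nat].

Definition is_fixed_point_limit (w : nat -> nat) : Prop :=
  forall i : nat, (1 <= i)%nat ->
    exists K : nat, forall k : nat, (K <= k)%nat ->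
      (i <= length (phik k))%nat /\ nth (i - 1) (phik k) 0%nat = w i.

Definition nth_zero_pos (w : nat -> nat) (n p : nat) : Prop :=
  (1 <= p)%nat /\ w p = 0%nat /\
  length (filter (fun i => Nat.eqb (w i) 0) (seq 1 p)) = n.

Definition d (n : nat) : Z :=
  Int_part ((1 + sqrt 2) * INR n - sqrt 2 / 2).

(** r_1 = 4/pi, r_{n+1} = n^2 / (r_n - (2n - 1)); r 0 is an unused dummy. *)
Fixpoint r (n : nat) : R :=
  match n with
  | O => 0
  | S m =>
    match m with
    | O => 4 / PI
    | S _ => (INR m) ^ 2 / (r m - (2 * INR m - 1))
    end
  end.

Definition e (n : nat) : Z := Int_part (r n + 1 / 2).

(* Main.v *)
Require Import Defs.
From Stdlib Require Import Reals ZArith Arith List.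
Open Scope R_scope.
From Stdlib Require Import Reals Lra Lia ZArith Classical.
Open Scope R_scope.

Definition s2 := sqrt 2.
Lemma s2_sq : s2 * s2 = 2. Proof. unfold s2; apply sqrt_sqrt; lra. Qed.
Lemma s2_pos : 0 < s2. Proof. unfold s2; apply sqrt_lt_R0; lra. Qed.
Lemma s2_bounds : 1.41 < s2 < 1.42.
Proof. pose proof s2_sq; pose proof s2_pos. split; nra. Qed.

Lemma odd_not_sq2 (m z : Z) : ((2*m-1)*(2*m-1) <> 2*z*z)%Z.
Proof. intro H. assert (Z.odd ((2*m-1)*(2*m-1)) = Z.odd (2*z*z)) by (rewrite H; auto).
  replace (2*m-1)%Z with (2*(m-1)+1)%Z in H0 by lia.
  rewrite <- Z.mul_assoc in H0. rewrite Z.odd_mul, !Z.odd_add, !Z.odd_mul in H0.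
  simpl in H0. destruct (Z.odd (m-1)); discriminate. Qed.

Definition tq (m : Z) : R := IZR (2*m-1) / s2.
Definition Gz (m : Z) : Z := Int_part (tq m).

Lemma tq_not_int m z : tq m <> IZR z.
Proof. unfold tq. intro H. pose proof s2_pos. pose proof s2_sq.
  assert (IZR (2*m-1) = IZR z * s2) by (rewrite <- H; field; lra).
  assert (IZR ((2*m-1)*(2*m-1)) = IZR (2*z*z)).
  { rewrite !mult_IZR, H2. replace (IZR 2) with (s2*s2) by (rewrite H1; reflexivity). ring. }
  apply eq_IZR in H3. eapply odd_not_sq2; eauto. Qed.

Lemma G_spec m : IZR (Gz m) < tq m < IZR (Gz m) + 1.
Proof. unfold Gz. destruct (base_Int_part (tq m)) as [H1 H2]. split; [|lra].
  destruct H1 as [H1|H1]; auto. exfalso; apply (tq_not_int m (Int_part (tq m))); auto. Qed.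

Lemma G_le m z : (Gz m <= z)%Z <-> tq m < IZR z + 1.
Proof. pose proof (G_spec m). split; intro H0.
  - apply IZR_le in H0. lra.
  - assert (IZR (Gz m) < IZR (z+1)) by (rewrite plus_IZR; simpl; lra).
    apply lt_IZR in H1. lia. Qed.

Lemma le_G m z : (z <= Gz m)%Z <-> IZR z < tq m.
Proof. pose proof (G_spec m). split; intro H0.
  - apply IZR_le in H0. lra.
  - assert (IZR z < IZR (Gz m + 1)) by (rewrite plus_IZR; simpl; lra).
    apply lt_IZR in H1. lia. Qed.

Lemma tq_S m : tq (m+1) = tq m + s2.
Proof. unfold tq. pose proof s2_pos. pose proof s2_sq.
  replace (2*(m+1)-1)%Z with ((2*m-1) + 2)%Z by ring. rewrite plus_IZR.
  assert (E : 2 / s2 = s2) by (rewrite <- H0 at 1; field; lra).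
  unfold Rdiv in *. rewrite Rmult_plus_distr_r. simpl IZR. rewrite E. reflexivity. Qed.

Lemma G_gap m : (1 <= Gz (m+1) - Gz m <= 2)%Z.
Proof. pose proof (G_spec m). pose proof (G_spec (m+1)). rewrite tq_S in H0.
  pose proof s2_bounds.
  assert (IZR (Gz m) < IZR (Gz (m+1))) by lra.
  assert (IZR (Gz (m+1)) < IZR (Gz m + 3)) by (rewrite plus_IZR; simpl; lra).
  apply lt_IZR in H2; apply lt_IZR in H3. lia. Qed.

Lemma G_gap2 m : (Gz (m+2) - Gz m <= 3)%Z.
Proof. pose proof (G_spec m). pose proof (G_spec (m+2)).
  assert (E : tq (m+2) = tq m + s2 + s2) by
    (replace (m+2)%Z with (m+1+1)%Z by ring; rewrite !tq_S; ring).
  rewrite E in H0.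
  pose proof s2_bounds.
  assert (IZR (Gz (m+2)) < IZR (Gz m + 4)) by (rewrite plus_IZR; simpl; lra).
  apply lt_IZR in H2. lia. Qed.

Definition dz (k : Z) : Z := (k + Gz k)%Z.

Lemma GC k m : (dz k <= m)%Z <-> (k + m <= Gz (m+1))%Z.
Proof. unfold dz. pose proof s2_pos. pose proof s2_sq.
  assert (E1 : (k + Gz k <= m)%Z <-> (Gz k <= m - k)%Z) by lia.
  rewrite E1, G_le, le_G. unfold tq. rewrite !minus_IZR, !plus_IZR, !mult_IZR.
  assert (Hid : s2 * (IZR m - IZR k + 1) - (2 * IZR k - 1)
     = (1 + s2) * (2 * (IZR m + 1) - 1 - s2 * (IZR k + IZR m))).
  { replace (2 * (IZR m + 1) - 1 - s2 * (IZR k + IZR m)) with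
      (2 * (IZR m + 1) - 1 - s2 * (IZR k + IZR m)) by ring.
    ring_simplify. rewrite <- H0. ring_simplify. ring. }
  assert (D1 : forall a b, a / s2 < b <-> a < b * s2).
  { intros a b; split; intro Hx.
    - apply Rmult_lt_compat_r with (r:=s2) in Hx; auto.
      unfold Rdiv in Hx. rewrite Rmult_assoc, Rinv_l, Rmult_1_r in Hx by lra. exact Hx.
    - apply (Rmult_lt_reg_r s2); auto. unfold Rdiv. rewrite Rmult_assoc, Rinv_l, Rmult_1_r by lra. exact Hx. }
  assert (D2 : forall a b, b < a / s2 <-> b * s2 < a).
  { intros a b; split; intro Hx.
    - apply Rmult_lt_compat_r with (r:=s2) in Hx; auto.
      unfold Rdiv in Hx. rewrite Rmult_assoc, Rinv_l, Rmult_1_r in Hx by lra. exact Hx.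
    - apply (Rmult_lt_reg_r s2); auto. unfold Rdiv. rewrite Rmult_assoc, Rinv_l, Rmult_1_r by lra. exact Hx. }
  rewrite D1, D2. simpl IZR.
  rewrite plus_IZR. simpl IZR.
  split; intro H1.
  - destruct (Rle_or_lt (2 * (IZR m + 1) - 1 - s2 * (IZR k + IZR m)) 0) as [H2|H2]; [|lra].
    assert ((1 + s2) * (2 * (IZR m + 1) - 1 - s2 * (IZR k + IZR m)) <= 0).
    { replace 0 with ((1+s2)*0) by ring; apply Rmult_le_compat_l; lra. }
    lra.
  - assert (0 < (1 + s2) * (2 * (IZR m + 1) - 1 - s2 * (IZR k + IZR m))) by (apply Rmult_lt_0_compat; lra).
    lra.
Qed.

From Stdlib Require Import Reals Lra Lia ZArith Classical.
Open Scope R_scope.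

Lemma Rdiv_lt_iff a b : a / s2 < b <-> a < b * s2.
Proof. pose proof s2_pos. split; intro Hx.
  - apply Rmult_lt_compat_r with (r:=s2) in Hx; auto.
    unfold Rdiv in Hx. rewrite Rmult_assoc, Rinv_l, Rmult_1_r in Hx by lra. exact Hx.
  - apply (Rmult_lt_reg_r s2); auto. unfold Rdiv. rewrite Rmult_assoc, Rinv_l, Rmult_1_r by lra. exact Hx. Qed.
Lemma Rlt_div_iff a b : b < a / s2 <-> b * s2 < a.
Proof. pose proof s2_pos. split; intro Hx.
  - apply Rmult_lt_compat_r with (r:=s2) in Hx; auto.
    unfold Rdiv in Hx. rewrite Rmult_assoc, Rinv_l, Rmult_1_r in Hx by lra. exact Hx.
  - apply (Rmult_lt_reg_r s2); auto. unfold Rdiv. rewrite Rmult_assoc, Rinv_l, Rmult_1_r by lra. exact Hx. Qed.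

Lemma G_ge m : (1 <= m)%Z -> (m + 1 <= Gz (m+1))%Z.
Proof. intro H. apply le_G. unfold tq. apply Rlt_div_iff.
  apply IZR_le in H. pose proof s2_bounds.
  replace (2*(m+1)-1)%Z with (2*m+1)%Z by ring. rewrite !plus_IZR, !mult_IZR. simpl IZR. nra. Qed.

Lemma G1 : Gz 1 = 0%Z.
Proof. pose proof s2_bounds. apply Z.le_antisymm.
  - apply G_le. unfold tq. simpl IZR. apply Rdiv_lt_iff. lra.
  - apply le_G. unfold tq. simpl IZR. apply Rlt_div_iff. lra. Qed.

Lemma dz1 : dz 1 = 1%Z.
Proof. unfold dz. rewrite G1. reflexivity. Qed.

Definition inD (m : Z) : Prop := exists k, (1 <= k)%Z /\ dz k = m.

Lemma F2 m : (1 <= m)%Z -> (inD m <-> (Gz (m+1) - Gz m = 2)%Z).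
Proof. intro Hm. pose proof (G_gap m). split.
  - intros [k [Hk Hd]].
    assert (A : (dz k <= m)%Z) by lia. apply GC in A.
    assert (B : ~ (dz k <= m - 1)%Z) by lia. rewrite GC in B.
    replace (m - 1 + 1)%Z with m in B by ring. lia.
  - intro H2. exists (Gz (m+1) - m)%Z. pose proof (G_ge m Hm). split; [lia|].
    apply Z.le_antisymm.
    + apply GC. lia.
    + destruct (Z.le_gt_cases m (dz (Gz (m+1) - m))) as [|C]; auto.
      assert (C' : (dz (Gz (m + 1) - m) <= m - 1)%Z) by lia. apply GC in C'.
      replace (m - 1 + 1)%Z with m in C' by ring. lia. Qed.

Lemma dz_S k : dz (k+1) = (dz k + 1 + (Gz (k+1) - Gz k))%Z.
Proof. unfold dz. ring. Qed.

Lemma dz_step k : (1 <= k)%Z ->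
  (inD k -> dz (k+1) = (dz k + 3)%Z) /\ (~ inD k -> dz (k+1) = (dz k + 2)%Z).
Proof. intro Hk. pose proof (G_gap k). pose proof (F2 k Hk). rewrite dz_S. split; intro H1.
  - apply H0 in H1. lia.
  - rewrite H0 in H1. lia. Qed.

Lemma notcons k : (1 <= k)%Z -> inD k -> ~ inD (k+1).
Proof. intros Hk H1 H2. apply (F2 k Hk) in H1. apply (F2 (k+1)) in H2; [|lia].
  pose proof (G_gap2 k). replace (k+1+1)%Z with (k+2)%Z in H2 by ring. lia. Qed.

Lemma dz_mono_aux j (p : nat) : (dz j + 2 + 2 * Z.of_nat p <= dz (j + 1 + Z.of_nat p))%Z.
Proof. induction p.
  - replace (j + 1 + Z.of_nat 0)%Z with (j+1)%Z by (simpl; ring). rewrite dz_S. pose proof (G_gap j). simpl. lia.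
  - rewrite Nat2Z.inj_succ. replace (j + 1 + Z.succ (Z.of_nat p))%Z with ((j + 1 + Z.of_nat p) + 1)%Z by lia.
    rewrite dz_S. pose proof (G_gap (j + 1 + Z.of_nat p)). lia. Qed.

Lemma dz_mono j k : (j < k)%Z -> (dz j + 2 * (k - j) <= dz k)%Z.
Proof. intro H. pose proof (dz_mono_aux j (Z.to_nat (k - j - 1))).
  rewrite Z2Nat.id in H0 by lia. replace (j + 1 + (k - j - 1))%Z with k in H0 by ring. lia. Qed.

Lemma dz_ge k : (1 <= k)%Z -> (2 * k - 1 <= dz k)%Z.
Proof. intro H. destruct (Z.eq_dec k 1). subst. rewrite dz1. lia.
  pose proof (dz_mono 1 k). rewrite dz1 in H0. lia. Qed.

Lemma Int_part_unique x z : IZR z <= x < IZR z + 1 -> Int_part x = z.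
Proof. intros [H1 H2]. unfold Int_part. assert (up x = (z + 1)%Z).
  { symmetry. apply tech_up; rewrite plus_IZR; simpl; lra. }
  rewrite H. ring. Qed.

Lemma d_eq n : d n = dz (Z.of_nat n).
Proof. unfold d, dz. apply Int_part_unique. pose proof (G_spec (Z.of_nat n)).
  assert (E : (1 + sqrt 2) * INR n - sqrt 2 / 2 = IZR (Z.of_nat n) + tq (Z.of_nat n)).
  { unfold tq. rewrite <- INR_IZR_INZ. rewrite minus_IZR, mult_IZR, <- INR_IZR_INZ.
    pose proof s2_pos. pose proof s2_sq. unfold s2 in *. simpl IZR.
    assert (E2 : (2 * INR n - 1) / sqrt 2 = (2 * INR n - 1) * sqrt 2 / 2).
    { apply (Rmult_eq_reg_r (sqrt 2)); [|lra]. unfold Rdiv.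
      rewrite Rmult_assoc, Rinv_l by lra. replace ((2 * INR n - 1) * sqrt 2 * / 2 * sqrt 2) with
        ((2 * INR n - 1) * (sqrt 2 * sqrt 2) * / 2) by ring. rewrite H1. field. }
    rewrite E2. field. }
  rewrite E, plus_IZR. lra. Qed.

From Stdlib Require Import Reals Lra Lia ZArith Classical.
Open Scope R_scope.

Lemma inseq_d m : inseq d m <-> inD m.
Proof. split.
  - intros [k [Hk Hd]]. exists (Z.of_nat k). rewrite <- d_eq. split; [lia|auto].
  - intros [k [Hk Hd]]. exists (Z.to_nat k). split; [lia|]. rewrite d_eq, Z2Nat.id by lia. auto. Qed.

Lemma d_sub1 n : (1 <= n)%nat -> d (n - 1) = dz (Z.of_nat n - 1).
Proof. intro H. rewrite d_eq. f_equal. lia. Qed.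

Lemma d_step n : (2 <= n)%nat ->
  (inD (Z.of_nat n - 1) -> d n = (d (n-1) + 3)%Z) /\ (~ inD (Z.of_nat n - 1) -> d n = (d (n-1) + 2)%Z).
Proof. intro Hn. rewrite d_sub1 by lia. rewrite d_eq.
  pose proof (dz_step (Z.of_nat n - 1)) as H. replace (Z.of_nat n - 1 + 1)%Z with (Z.of_nat n) in H by ring.
  apply H. lia. Qed.

Lemma b_d : b_rec d.
Proof. split. { rewrite d_eq. apply dz1. }
  intros n Hn. cbv zeta. rewrite !inseq_d. destruct (d_step n Hn); split; auto. Qed.

Lemma a_d : a_rec d.
Proof. split. { rewrite d_eq. apply dz1. }
  intros n Hn. cbv zeta. rewrite !inseq_d. pose proof (d_step n Hn) as [H1 H2].
  split; [|split].
  - intro H. apply H2. intro H'. apply (notcons (Z.of_nat n - 1)) in H'; [|lia].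
    replace (Z.of_nat n - 1 + 1)%Z with (Z.of_nat n) in H' by ring. auto.
  - intros [_ H]. auto.
  - intros [_ H]. auto. Qed.

Lemma f_ge (f : nat -> Z) : f 1%nat = 1%Z -> (forall n, (2 <= n)%nat -> (f (n-1)%nat + 2 <= f n)%Z) ->
  forall k, (1 <= k)%nat -> (2 * Z.of_nat k - 1 <= f k)%Z.
Proof. intros H1 H2. induction k; intro Hk; [lia|].
  destruct (Nat.eq_dec k 0). subst. rewrite H1. lia.
  specialize (H2 (S k)). replace (S k - 1)%nat with k in H2 by lia. specialize (IHk ltac:(lia)).
  specialize (H2 ltac:(lia)). lia. Qed.

Lemma inseq_transfer (f : nat -> Z) n m :
  (forall k, (1 <= k)%nat -> (2 * Z.of_nat k - 1 <= f k)%Z) ->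
  (forall k, (1 <= k)%nat -> (k < n)%nat -> f k = d k) -> (2 <= n)%nat -> (m <= Z.of_nat n)%Z ->
  (inseq f m <-> inD m).
Proof. intros Hge Hd Hn Hm. split.
  - intros [k [Hk Hf]]. specialize (Hge k Hk). rewrite <- inseq_d. exists k. split; auto.
    rewrite <- Hd; auto. lia.
  - intros [k [Hk Hf]]. pose proof (dz_ge k Hk). exists (Z.to_nat k). split; [lia|].
    rewrite Hd by lia. rewrite d_eq, Z2Nat.id by lia. auto. Qed.

Lemma strong_ind (P : nat -> Prop) : (forall n, (forall k, (k < n)%nat -> P k) -> P n) -> forall n, P n.
Proof. intros H n. assert (forall m, (m <= n)%nat -> P m); [|auto].
  induction n; intros m Hm. apply H; intros; lia.
  apply H. intros k Hk. apply IHn. lia. Qed.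

Lemma b_unique f : b_rec f -> forall n, (1 <= n)%nat -> f n = d n.
Proof. intros [H1 H2].
  assert (Hst : forall n, (2 <= n)%nat -> (f (n-1)%nat + 2 <= f n)%Z).
  { intros n Hn. destruct (H2 n Hn) as [A B]. destruct (classic (inseq f (Z.of_nat n - 1))) as [C|C].
    rewrite (B C); lia. rewrite (A C); lia. }
  pose proof (f_ge f H1 Hst) as Hge.
  apply (strong_ind (fun n => (1 <= n)%nat -> f n = d n)). intros n IH Hn.
  destruct (Nat.eq_dec n 1). { subst. rewrite H1, d_eq. symmetry. apply dz1. }
  assert (Hn2 : (2 <= n)%nat) by lia.
  destruct (H2 n Hn2) as [A B]. destruct (d_step n Hn2) as [C D].
  assert (Hi : inseq f (Z.of_nat n - 1) <-> inD (Z.of_nat n - 1)).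
  { apply inseq_transfer with n; auto. lia. }
  assert (Hp : f (n-1)%nat = d (n-1)%nat) by (apply IH; lia).
  destruct (classic (inD (Z.of_nat n - 1))) as [E|E].
  - rewrite (B (proj2 Hi E)), (C E), Hp. auto.
  - rewrite A, (D E), Hp; auto. rewrite Hi; auto. Qed.

Lemma a_unique f : a_rec f -> forall n, (1 <= n)%nat -> f n = d n.
Proof. intros [H1 H2].
  assert (Hst : forall n, (2 <= n)%nat -> (f (n-1)%nat + 2 <= f n)%Z).
  { intros n Hn. destruct (H2 n Hn) as [A [B C]]. cbv zeta in *.
    destruct (classic (inseq f (Z.of_nat n))) as [E|E]. rewrite (A E); lia.
    destruct (classic (inseq f (Z.of_nat n - 1))) as [F|F]. rewrite C; auto; lia. rewrite B; auto; lia. }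
  pose proof (f_ge f H1 Hst) as Hge.
  apply (strong_ind (fun n => (1 <= n)%nat -> f n = d n)). intros n IH Hn.
  destruct (Nat.eq_dec n 1). { subst. rewrite H1, d_eq. symmetry. apply dz1. }
  assert (Hn2 : (2 <= n)%nat) by lia.
  destruct (H2 n Hn2) as [A [B B']]. cbv zeta in *. destruct (d_step n Hn2) as [C D].
  assert (Hi : inseq f (Z.of_nat n - 1) <-> inD (Z.of_nat n - 1)).
  { apply inseq_transfer with n; auto. lia. }
  assert (Hi' : inseq f (Z.of_nat n) <-> inD (Z.of_nat n)).
  { apply inseq_transfer with n; auto. lia. }
  assert (Hp : f (n-1)%nat = d (n-1)%nat) by (apply IH; lia).
  destruct (classic (inD (Z.of_nat n - 1))) as [E|E].
  - assert (~ inD (Z.of_nat n)).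
    { intro X. apply (notcons (Z.of_nat n - 1)) in E; [|lia].
      replace (Z.of_nat n - 1 + 1)%Z with (Z.of_nat n) in E by ring. auto. }
    rewrite B', (C E), Hp; auto. rewrite Hi, Hi'. auto.
  - rewrite (D E), <- Hp. destruct (classic (inD (Z.of_nat n))) as [F|F].
    + apply A. apply Hi'. auto.
    + apply B. rewrite Hi, Hi'. auto. Qed.

Theorem part_a f : a_rec f <-> (forall n : nat, (1 <= n)%nat -> f n = d n).
Proof. split. apply a_unique. intro H. pose proof a_d as [A B].
  split. rewrite H; auto. intros n Hn. cbv zeta.
  assert (Hs : forall m, inseq f m <-> inseq d m).
  { intro m; split; intros [k [Hk Hf]]; exists k; split; auto; rewrite <- Hf. symmetry. all: apply H; auto. }
  rewrite !Hs, !H by lia. apply B; auto. Qed.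

Theorem part_b f : b_rec f <-> (forall n : nat, (1 <= n)%nat -> f n = d n).
Proof. split. apply b_unique. intro H. pose proof b_d as [A B].
  split. rewrite H; auto. intros n Hn. cbv zeta.
  assert (Hs : forall m, inseq f m <-> inseq d m).
  { intro m; split; intros [k [Hk Hf]]; exists k; split; auto; rewrite <- Hf. symmetry. all: apply H; auto. }
  rewrite !Hs, !H by lia. apply B; auto. Qed.

Close Scope R_scope.
From Stdlib Require Import Reals Lra Lia ZArith Classical List.
Import ListNotations.

Definition chi (i : nat) : nat :=
  if Z.eqb (Gz (Z.of_nat i + 1) - Gz (Z.of_nat i)) 2 then 0%nat else 1%nat.

Lemma chi_0 i : (1 <= i)%nat -> (chi i = 0%nat <-> inD (Z.of_nat i)).
Proof. intro H. rewrite F2 by lia. unfold chi. destruct (Z.eqb_spec (Gz (Z.of_nat i + 1) - Gz (Z.of_nat i)) 2); 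
  split; intro; auto; try discriminate; contradiction. Qed.

Lemma chi_01 i : chi i = 0%nat \/ chi i = 1%nat.
Proof. unfold chi. destruct (_ =? _)%Z; auto. Qed.

Definition cnt (L : nat) : nat := length (filter (fun i => Nat.eqb (chi i) 0) (seq 1 L)).

Lemma cnt_S L : cnt (S L) = (cnt L + (if Nat.eqb (chi (S L)) 0 then 1 else 0))%nat.
Proof. unfold cnt. rewrite seq_S, filter_app, length_app. simpl. destruct (Nat.eqb (chi (S L)) 0); simpl; lia. Qed.

Lemma cnt_eq L : Z.of_nat (cnt L) = (Gz (Z.of_nat L + 1) - Z.of_nat L)%Z.
Proof. induction L.
  - simpl. replace (0+1)%Z with 1%Z by ring. rewrite G1. reflexivity.
  - rewrite cnt_S. rewrite Nat2Z.inj_add, IHL. pose proof (G_gap (Z.of_nat L + 1)).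
    pose proof (chi_0 (S L) ltac:(lia)). rewrite F2 in H0 by lia.
    replace (Z.of_nat (S L)) with (Z.of_nat L + 1)%Z in * by lia.
    destruct (Nat.eqb_spec (chi (S L)) 0).
    + apply H0 in e. simpl. lia.
    + assert ((Gz (Z.of_nat L + 1 + 1) - Gz (Z.of_nat L + 1))%Z <> 2%Z) by (rewrite <- H0; auto). simpl. lia. Qed.

Lemma between k i : (dz k < i < dz (k+1))%Z -> ~ inD i.
Proof. intros H [j [Hj E]]. subst. destruct (Z.lt_trichotomy j k) as [C|[C|C]].
  - pose proof (dz_mono j k C). lia.
  - subst. lia.
  - destruct (Z.eq_dec j (k+1)). subst; lia. pose proof (dz_mono (k+1) j ltac:(lia)). lia. Qed.

Lemma dz_inD k : (1 <= k)%Z -> inD (dz k).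
Proof. intro. exists k; auto. Qed.

Lemma phi_app a b : phi (a ++ b) = phi a ++ phi b.
Proof. unfold phi. apply flat_map_app. Qed.

Lemma chi_pos_dz (k : Z) (P : nat) : (1 <= k)%Z -> Z.of_nat P = dz k -> chi P = 0%nat.
Proof. intros Hk HP. pose proof (dz_ge k Hk). apply chi_0. lia. rewrite HP. apply dz_inD; auto. Qed.

Lemma chi_pos_btw (k : Z) (P : nat) : (1 <= k)%Z -> (dz k < Z.of_nat P < dz (k+1))%Z -> chi P = 1%nat.
Proof. intros Hk HP. pose proof (dz_ge k Hk). destruct (chi_01 P); auto.
  apply chi_0 in H0; [|lia]. exfalso. eapply between; eauto. Qed.

Lemma phi_chi L : phi (map chi (seq 1 L)) = map chi (seq 1 (2 * L + cnt L)).
Proof. induction L.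
  - reflexivity.
  - rewrite seq_S, map_app, phi_app, IHL. rewrite cnt_S.
    set (P0 := (2 * L + cnt L)%nat).
    assert (HP : Z.of_nat (S P0) = dz (Z.of_nat L + 1)).
    { unfold P0. rewrite Nat2Z.inj_succ, Nat2Z.inj_add, cnt_eq. unfold dz. lia. }
    assert (H1 : chi (S P0) = 0%nat) by (apply (chi_pos_dz (Z.of_nat L + 1)); auto; lia).
    pose proof (chi_0 (S L) ltac:(lia)) as HC. replace (Z.of_nat (S L)) with (Z.of_nat L + 1)%Z in HC by lia.
    pose proof (dz_step (Z.of_nat L + 1) ltac:(lia)) as [S3 S2].
    destruct (Nat.eqb_spec (chi (S L)) 0) as [E|E].
    + replace (2 * S L + (cnt L + 1))%nat with (P0 + 3)%nat by (unfold P0; lia).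
      rewrite seq_app, map_app. f_equal. simpl. rewrite E. simpl.
      apply HC in E. apply S3 in E.
      rewrite H1. rewrite (chi_pos_btw (Z.of_nat L + 1) (S (S P0))), (chi_pos_btw (Z.of_nat L + 1) (S (S (S P0)))); auto; lia.
    + replace (2 * S L + (cnt L + 0))%nat with (P0 + 2)%nat by (unfold P0; lia).
      rewrite seq_app, map_app. f_equal. simpl.
      assert (chi (S L) = 1%nat) by (destruct (chi_01 (S L)); auto; contradiction). rewrite H.
      assert (~ inD (Z.of_nat L + 1)) by (rewrite <- HC; auto). apply S2 in H0.
      rewrite H1. rewrite (chi_pos_btw (Z.of_nat L + 1) (S (S P0))); auto; lia. Qed.

Fixpoint len (k : nat) : nat := match k with O => 1%nat | S k' => (2 * len k' + cnt (len k'))%nat end.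

Lemma phik_eq k : phik k = map chi (seq 1 (len k)).
Proof. induction k.
  - simpl. unfold phik. simpl. f_equal. symmetry. apply (chi_pos_dz 1); [lia| rewrite dz1; reflexivity].
  - change (phik (S k)) with (phi (phik k)). rewrite IHk, phi_chi. reflexivity. Qed.

Lemma len_ge k : (k + 1 <= len k)%nat.
Proof. induction k; simpl; lia. Qed.

Lemma nth_phik k i : (1 <= i)%nat -> (i <= len k)%nat -> nth (i - 1) (phik k) 0%nat = chi i.
Proof. intros H1 H2. rewrite phik_eq. rewrite nth_indep with (d' := chi 0) by (rewrite length_map, length_seq; lia).
  rewrite map_nth, seq_nth by lia. f_equal. lia. Qed.

Lemma fp_chi : is_fixed_point_limit chi.
Proof. intros i Hi. exists i. intros k Hk. pose proof (len_ge k). split.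
  - rewrite phik_eq, length_map, length_seq. lia.
  - apply nth_phik; lia. Qed.

Lemma fp_unique w : is_fixed_point_limit w -> forall i, (1 <= i)%nat -> w i = chi i.
Proof. intros Hw i Hi. destruct (Hw i Hi) as [K HK]. destruct (HK (Nat.max K i) ltac:(lia)) as [_ E].
  rewrite <- E. apply nth_phik; auto. pose proof (len_ge (Nat.max K i)). lia. Qed.

Theorem part_c : exists w : nat -> nat, is_fixed_point_limit w.
Proof. exists chi. apply fp_chi. Qed.

Theorem part_cd w : is_fixed_point_limit w ->
     forall n : nat, (1 <= n)%nat ->
       exists p : nat, nth_zero_pos w n p /\ Z.of_nat p = d n.
Proof. intros Hw n Hn. pose proof (dz_ge (Z.of_nat n) ltac:(lia)).
  exists (Z.to_nat (dz (Z.of_nat n))). rewrite d_eq. split; [|apply Z2Nat.id; lia].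
  set (p := Z.to_nat (dz (Z.of_nat n))).
  assert (Hp : Z.of_nat p = dz (Z.of_nat n)) by (unfold p; apply Z2Nat.id; lia).
  split; [lia|split].
  - rewrite fp_unique by (auto; lia). apply (chi_pos_dz (Z.of_nat n)); auto; lia.
  - assert (E : filter (fun i => Nat.eqb (w i) 0) (seq 1 p) = filter (fun i => Nat.eqb (chi i) 0) (seq 1 p)).
    { apply filter_ext_in. intros a Ha. apply in_seq in Ha. rewrite fp_unique; auto. lia. }
    rewrite E. fold (cnt p). apply Nat2Z.inj. rewrite cnt_eq, Hp.
    assert (A : (dz (Z.of_nat n) <= dz (Z.of_nat n))%Z) by lia. apply GC in A.
    assert (B : ~ (dz (Z.of_nat n + 1) <= dz (Z.of_nat n))%Z).
    { pose proof (dz_mono (Z.of_nat n) (Z.of_nat n + 1) ltac:(lia)). lia. }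
    rewrite GC in B. lia. Qed.

Open Scope R_scope.

From Stdlib Require Import Reals Lra Lia.
From Coquelicot Require Import Coquelicot.
Open Scope R_scope.

Lemma is_derive_Rmult f g x df dg : is_derive f x df -> is_derive g x dg ->
  is_derive (fun t => f t * g t) x (df * g x + f x * dg).
Proof. intros. apply (is_derive_mult f g x df dg); auto. intros; apply Rmult_comm. Qed.

Lemma is_derive_Ropp f x l : is_derive f x l -> is_derive (fun t => - f t) x (- l).
Proof. intro H. apply (is_derive_opp f x l H). Qed.

Definition q (t : R) : R := (1 - t^2) / (1 + t^2).
Definition fk (k : nat) (t : R) : R := (t^2)^k * (q t)^k / (1 + t^2).
Definition gk (k : nat) (t : R) : R := t^2 * fk k t.

Lemma sq1_pos x : 0 < 1 + x^2.
Proof. nra. Qed.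

Lemma D_odd k x : is_derive (fun t => t * (t^2)^k) x (INR (2*k+1) * (x^2)^k).
Proof. apply is_derive_ext with (f := fun t => t ^ (S (2*k))).
  { intro t. change (t ^ S (2*k)) with (t * t^(2*k)). rewrite pow_mult. reflexivity. }
  replace (INR (2 * k + 1) * (x ^ 2) ^ k) with (INR (S (2*k)) * 1 * x ^ Nat.pred (S (2*k))).
  2:{ change (Nat.pred (S (2*k))) with (2*k)%nat. rewrite pow_mult. replace (S (2*k)) with (2*k+1)%nat by lia. ring. }
  apply is_derive_pow. auto_derive; auto. Qed.

Lemma D_q x : is_derive q x (-4 * x / (1 + x^2)^2).
Proof. pose proof (sq1_pos x). unfold q. auto_derive. lra. field. lra. Qed.

Lemma D_qpow k x : is_derive (fun t => q t ^ (S k)) x (INR (S k) * (-4 * x / (1 + x^2)^2) * q x ^ k).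
Proof. apply (is_derive_pow q (S k) x). apply D_q. Qed.

Lemma cont_fk k x : continuous (fk k) x.
Proof. apply (@ex_derive_continuous R_AbsRing R_NormedModule (fk k) x). pose proof (sq1_pos x). unfold fk, q. auto_derive. lra. Qed.
Lemma cont_gk k x : continuous (gk k) x.
Proof. apply (@ex_derive_continuous R_AbsRing R_NormedModule (gk k) x). pose proof (sq1_pos x). unfold gk, fk, q. auto_derive. lra. Qed.

Lemma comb3 (f1 f2 f3 h : R -> R) c1 c2 c3 :
  (forall x, 0 <= x <= 1 -> is_derive h x (c1 * f1 x + c2 * f2 x + c3 * f3 x)) ->
  (forall x, continuous f1 x) -> (forall x, continuous f2 x) -> (forall x, continuous f3 x) ->
  c1 * RInt f1 0 1 + c2 * RInt f2 0 1 + c3 * RInt f3 0 1 = h 1 - h 0.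
Proof. intros Hd C1 C2 C3.
  assert (I1 : is_RInt f1 0 1 (RInt f1 0 1)) by (apply (@RInt_correct R_CompleteNormedModule), (@ex_RInt_continuous R_CompleteNormedModule); intros; auto).
  assert (I2 : is_RInt f2 0 1 (RInt f2 0 1)) by (apply (@RInt_correct R_CompleteNormedModule), (@ex_RInt_continuous R_CompleteNormedModule); intros; auto).
  assert (I3 : is_RInt f3 0 1 (RInt f3 0 1)) by (apply (@RInt_correct R_CompleteNormedModule), (@ex_RInt_continuous R_CompleteNormedModule); intros; auto).
  pose proof (is_RInt_plus _ _ _ _ _ _ (is_RInt_plus _ _ _ _ _ _ (is_RInt_scal _ _ _ c1 _ I1) (is_RInt_scal _ _ _ c2 _ I2)) (is_RInt_scal _ _ _ c3 _ I3)) as J.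
  assert (K : is_RInt (fun x => c1 * f1 x + c2 * f2 x + c3 * f3 x) 0 1 (h 1 - h 0)).
  { apply (is_RInt_derive h). 
    - intros x Hx. rewrite Rmin_left, Rmax_right in Hx by lra. apply Hd; auto.
    - intros x _. apply continuity_pt_filterlim.
      assert (CC : forall c f, (forall x, continuous f x) -> continuity_pt (fun x => c * f x) x).
      { intros c f Cf. apply continuity_pt_mult. apply continuity_pt_const. unfold constant. intros a b; reflexivity.
        apply continuity_pt_filterlim. apply Cf. }
      apply continuity_pt_plus; [apply continuity_pt_plus|]; try apply CC; auto. }
  assert (J' : is_RInt (fun x => c1 * f1 x + c2 * f2 x + c3 * f3 x) 0 1 (c1 * RInt f1 0 1 + c2 * RInt f2 0 1 + c3 * RInt f3 0 1)) by exact J.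
  apply (@is_RInt_unique R_CompleteNormedModule) in J'. apply (@is_RInt_unique R_CompleteNormedModule) in K.
  rewrite <- J', <- K. reflexivity. Qed.

Definition F k := RInt (fk k) 0 1.
Definition Gi k := RInt (gk k) 0 1.

Lemma F0 : F 0 = PI / 4.
Proof. unfold F. rewrite <- atan_1. replace (atan 1) with (atan 1 - atan 0) by (rewrite atan_0; ring).
  replace (RInt (fk 0) 0 1) with (1 * RInt (fk 0) 0 1 + 0 * RInt (fk 0) 0 1 + 0 * RInt (fk 0) 0 1) by ring.
  apply comb3; auto using cont_fk.
  intros x _. apply is_derive_Reals. replace (1 * fk 0 x + 0 * fk 0 x + 0 * fk 0 x) with (/ (1 + x^2)).
  apply derivable_pt_lim_atan. unfold fk. simpl. field. pose proof (sq1_pos x). simpl in H. lra. Qed.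

Lemma G0F0 : Gi 0 + F 0 = 1.
Proof. unfold Gi, F. replace 1 with ((fun t : R => t) 1 - (fun t : R => t) 0) at 3 by (simpl; ring).
  replace (RInt (gk 0) 0 1 + RInt (fk 0) 0 1) with (1 * RInt (gk 0) 0 1 + 1 * RInt (fk 0) 0 1 + 0 * RInt (fk 0) 0 1) by ring.
  apply (comb3 _ _ _ (fun t => t)); auto using cont_fk, cont_gk.
  intros x _. replace (1 * gk 0 x + 1 * fk 0 x + 0 * fk 0 x) with 1.
  auto_derive; auto. unfold gk, fk. simpl. field. pose proof (sq1_pos x). simpl in H. lra. Qed.

Lemma I2 k : INR (2*k+2) * F (S k) - INR (2*k+1) * F k + INR (4*k+3) * Gi k = 0.
Proof. unfold F, Gi.
  set (h := fun t => - ((t * (t^2)^k) * q t ^ (S k))).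
  match goal with |- ?E = 0 => enough (HE : E = h 1 - h 0) by (rewrite HE; unfold h, q; simpl; field) end.
  replace (INR (2*k+2) * RInt (fk (S k)) 0 1 - INR (2*k+1) * RInt (fk k) 0 1 + INR (4*k+3) * RInt (gk k) 0 1)
   with (INR (2*k+2) * RInt (fk (S k)) 0 1 + (- INR (2*k+1)) * RInt (fk k) 0 1 + INR (4*k+3) * RInt (gk k) 0 1) by ring.
  apply (comb3 _ _ _ h); auto using cont_fk, cont_gk.
  intros x _. unfold h.
  pose proof (is_derive_Rmult _ _ x _ _ (D_odd k x) (D_qpow k x)) as Hd.
  match goal with |- is_derive _ _ ?L => replace L with (- (INR (2 * k + 1) * (x ^ 2) ^ k * q x ^ S k +
        x * (x ^ 2) ^ k * (INR (S k) * (-4 * x / (1 + x ^ 2) ^ 2) * q x ^ k))) end.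
  apply is_derive_Ropp. exact Hd.
  unfold gk, fk. simpl pow. generalize ((x * (x * 1)) ^ k) as A. generalize (q x ^ k) as Q. intros Q A.
  unfold q. rewrite !plus_INR, !mult_INR, !S_INR. simpl INR. field. pose proof (sq1_pos x). simpl in H. lra. Qed.

Lemma I3 k : INR (2*k+3) * Gi (S k) + INR (4*k+5) * F (S k) - INR (2*k+2) * Gi k = 0.
Proof. unfold F, Gi.
  set (h := fun t => (t * (t^2)^(S k)) * q t ^ (S k)).
  match goal with |- ?E = 0 => enough (HE : E = h 1 - h 0) by (rewrite HE; unfold h, q; simpl; field) end.
  replace (INR (2*k+3) * RInt (gk (S k)) 0 1 + INR (4*k+5) * RInt (fk (S k)) 0 1 - INR (2*k+2) * RInt (gk k) 0 1)
   with (INR (2*k+3) * RInt (gk (S k)) 0 1 + INR (4*k+5) * RInt (fk (S k)) 0 1 + (- INR (2*k+2)) * RInt (gk k) 0 1) by ring.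
  apply (comb3 _ _ _ h); auto using cont_fk, cont_gk.
  intros x _. unfold h.
  pose proof (is_derive_Rmult _ _ x _ _ (D_odd (S k) x) (D_qpow k x)) as Hd.
  match goal with |- is_derive _ _ ?L => replace L with ((INR (2 * S k + 1) * (x ^ 2) ^ S k * q x ^ S k +
        x * (x ^ 2) ^ S k * (INR (S k) * (-4 * x / (1 + x ^ 2) ^ 2) * q x ^ k))) end.
  exact Hd.
  unfold gk, fk. simpl pow. generalize ((x * (x * 1)) ^ k) as A. generalize (q x ^ k) as Q. intros Q A.
  unfold q. rewrite !plus_INR, !mult_INR, !S_INR. simpl INR. field. pose proof (sq1_pos x). simpl in H. lra. Qed.

Lemma F_pos k : 0 < F k.
Proof. apply RInt_gt_0. lra.
  - intros x Hx. unfold fk, q. pose proof (sq1_pos x). apply Rdiv_lt_0_compat; auto.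
    apply Rmult_lt_0_compat; apply pow_lt. nra. apply Rdiv_lt_0_compat; nra.
  - intros; apply cont_fk. Qed.

Lemma G_pos k : 0 < Gi k.
Proof. apply RInt_gt_0. lra.
  - intros x Hx. unfold gk, fk, q. pose proof (sq1_pos x). apply Rmult_lt_0_compat. nra. apply Rdiv_lt_0_compat; auto.
    apply Rmult_lt_0_compat; apply pow_lt. nra. apply Rdiv_lt_0_compat; nra.
  - intros; apply cont_gk. Qed.

From Stdlib Require Import Reals Lra Lia ZArith.
From Coquelicot Require Import Coquelicot.
Open Scope R_scope.

Definition Y (n : nat) : R :=
  match n with
  | O => 1
  | S m => if Nat.even m then F (Nat.div2 m) / INR (fact m) else Gi (Nat.div2 m) / INR (fact m)
  end.

Lemma Y_odd k : Y (S (2*k)) = F k / INR (fact (2*k)).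
Proof. change (Y (S (2*k))) with (if Nat.even (2*k) then F (Nat.div2 (2*k)) / INR (fact (2*k)) else Gi (Nat.div2 (2*k)) / INR (fact (2*k))).
  rewrite Nat.even_mul. simpl Nat.even. simpl orb. rewrite Nat.div2_double. reflexivity. Qed.

Lemma Y_even k : Y (S (S (2*k))) = Gi k / INR (fact (S (2*k))).
Proof. change (Y (S (S (2*k)))) with (if Nat.even (S (2*k)) then F (Nat.div2 (S (2*k))) / INR (fact (S (2*k))) else Gi (Nat.div2 (S (2*k))) / INR (fact (S (2*k)))).
  rewrite Nat.even_succ, Nat.odd_mul. simpl Nat.odd. simpl andb. rewrite Nat.div2_succ_double. reflexivity. Qed.

Lemma fact_pos' n : 0 < INR (fact n).
Proof. apply lt_0_INR. apply lt_O_fact. Qed.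

Lemma Y_pos n : 0 < Y n.
Proof. destruct n. simpl; lra. destruct (Nat.Even_or_Odd n) as [[k Hk]|[k Hk]]; subst.
  - rewrite Y_odd. apply Rdiv_lt_0_compat. apply F_pos. apply fact_pos'.
  - replace (2*k+1)%nat with (S (2*k)) by lia. rewrite Y_even. apply Rdiv_lt_0_compat. apply G_pos. apply fact_pos'. Qed.

Lemma Yrec n : (1 <= n)%nat -> INR n ^ 2 * Y (S n) = Y (n - 1) - (2 * INR n - 1) * Y n.
Proof. intro Hn. destruct (Nat.Even_or_Odd n) as [[k Hk]|[k Hk]]; subst.
  - destruct k as [|k]; [lia|]. replace (2 * S k)%nat with (S (S (2*k))) by lia.
    replace (S (S (2 * k)) - 1)%nat with (S (2*k)) by lia.
    replace (S (S (S (2*k)))) with (S (2 * S k)) by lia.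
    rewrite Y_odd, Y_even, Y_odd. pose proof (I2 k).
    replace (2 * S k)%nat with (S (S (2*k))) by lia.
    pose proof (fact_pos' (2*k)).
    pose proof (pos_INR k). simpl fact. repeat rewrite ?mult_INR, ?S_INR, ?plus_INR in *. simpl INR in *.
    replace (F (S k)) with (((2 * INR k + 1) * F k - (4 * INR k + 3) * Gi k) / (2 * INR k + 2)) by (pose proof (pos_INR k); field_simplify_eq; lra).
    field. repeat split; nra.
  - destruct k as [|k].
    + change (INR 1 ^ 2 * Y (S (S (2*0))) = Y 0 - (2 * INR 1 - 1) * Y (S (2*0))). rewrite Y_even, Y_odd.
      simpl. pose proof G0F0. unfold Rdiv. rewrite !Rinv_1. lra.
    + replace (2 * S k + 1)%nat with (S (S (S (2*k)))) by lia.
      replace (S (S (S (2 * k))) - 1)%nat with (S (S (2*k))) by lia.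
      replace (S (S (S (S (2*k))))) with (S (S (2 * S k))) by lia.
      replace (S (S (S (2*k)))) with (S (2 * S k)) by lia.
      rewrite Y_odd, Y_even, Y_even. pose proof (I3 k).
      replace (S (2 * S k))%nat with (S (S (S (2*k)))) by lia.
      replace (2 * S k)%nat with (S (S (2*k))) by lia.
      pose proof (fact_pos' (2*k)).
      pose proof (pos_INR k). simpl fact. repeat rewrite ?mult_INR, ?S_INR, ?plus_INR in *. simpl INR in *.
      replace (Gi (S k)) with (((2 * INR k + 2) * Gi k - (4 * INR k + 5) * F (S k)) / (2 * INR k + 3)) by (field_simplify_eq; lra).
      field. set (X := INR (fact (k + (k+0)))) in *. assert (0 <= INR k * X) by nra. repeat split; apply Rgt_not_eq; nra.
Qed.

Lemma r_S n : (1 <= n)%nat -> r (S n) = INR n ^ 2 / (r n - (2 * INR n - 1)).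
Proof. intro H. destruct n as [|m]; [lia|]. reflexivity. Qed.

Lemma r_Y n : (1 <= n)%nat -> r n = Y (n - 1) / Y n.
Proof. induction n as [|n IH]; intro H; [lia|].
  destruct (Nat.eq_dec n 0) as [E|E].
  - subst. change (r 1) with (4/PI). change (Y (1-1)) with 1. change (Y 1) with (Y (S (2*0))). rewrite Y_odd, F0. simpl. field. apply PI_neq0.
  - rewrite r_S by lia. rewrite IH by lia. replace (S n - 1)%nat with n by lia.
    pose proof (Yrec n ltac:(lia)). pose proof (Y_pos n). pose proof (Y_pos (S n)). pose proof (Y_pos (n-1)).
    assert (E2 : Y (n - 1) / Y n - (2 * INR n - 1) = INR n ^ 2 * Y (S n) / Y n).
    { rewrite H0. field. lra. }
    assert (INR n <> 0) by (apply not_0_INR; lia).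
    rewrite E2. field. repeat split; try lra; auto. Qed.

Lemma r_gap n : (1 <= n)%nat -> r n - (2 * INR n - 1) = INR n ^ 2 * Y (S n) / Y n.
Proof. intro H. rewrite r_Y by auto. pose proof (Yrec n H). pose proof (Y_pos n).
  rewrite H0. field. lra. Qed.

Lemma r_gt n : (1 <= n)%nat -> r n - (2 * INR n - 1) > 0.
Proof. intro H. rewrite r_gap by auto. apply Rdiv_lt_0_compat; [|apply Y_pos].
  apply Rmult_lt_0_compat. apply pow_lt. apply lt_0_INR; lia. apply Y_pos. Qed.

Lemma r_rel n : (1 <= n)%nat -> (r n - (2 * INR n - 1)) * r (S n) = INR n ^ 2.
Proof. intro H. rewrite (r_S n H). pose proof (r_gt n H). field. lra. Qed.

Theorem part_e0 : forall n : nat, (1 <= n)%nat -> r n - (2 * INR n - 1) <> 0.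
Proof. intros n H. pose proof (r_gt n H). lra. Qed.

From Stdlib Require Import Reals Lra Lia ZArith.
Open Scope R_scope.

Definition aa := 1 + s2.
Definition bb := s2 - 1.
Lemma ab1 : aa * bb = 1. Proof. unfold aa, bb. pose proof s2_sq. nra. Qed.
Lemma bb_bounds : 0.41 < bb < 0.42. Proof. unfold bb. pose proof s2_bounds. lra. Qed.
Lemma aa_bb : aa = 2 + bb. Proof. unfold aa, bb. ring. Qed.

Definition Lb (x : R) := aa * (x - /2).
Definition Ub (x : R) := Lb x + bb / (4 * x).

Lemma key_upper x v L W E : 0 <= W -> 4 * W <= 2 * x + 1 -> 2 * x + 1 < v -> x^2 <= W * L ->
  L - E <= v -> 0 <= E -> x^2 <= (W + E / 4) * v.
Proof. intros. destruct (Rle_or_lt L v). nra. nra. Qed.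

Lemma key_lower x v U Z E : 0 <= Z -> 4 * Z <= 2 * x + 1 -> 2 * x + 1 < v -> Z * U <= x^2 ->
  v <= U + E -> 0 <= E -> (Z - E / 4) * v <= x^2.
Proof. intros. destruct (Rle_or_lt v U). nra. nra. Qed.

Lemma inv_ii x : 1 <= x -> x^2 <= (bb * (x - /2) + bb / (4 * x)) * (aa * (x + 1 - /2)).
Proof. intro H. pose proof ab1.
  replace ((bb * (x - /2) + bb / (4 * x)) * (aa * (x + 1 - /2))) with
    ((aa * bb) * ((x - /2) * (x + /2) + (x + /2) / (4 * x))) by (field; lra).
  rewrite H0. replace (1 * ((x - / 2) * (x + / 2) + (x + / 2) / (4 * x))) with (x^2 + / (8 * x)) by (field; lra).
  assert (0 < / (8 * x)) by (apply Rinv_0_lt_compat; lra). lra. Qed.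

Lemma inv_i x : 1 <= x -> bb * (x - /2) * (aa * (x + 1 - /2) + bb / (4 * (x + 1))) <= x^2.
Proof. intro H. pose proof ab1. pose proof bb_bounds.
  replace (bb * (x - /2) * (aa * (x + 1 - /2) + bb / (4 * (x + 1)))) with
    ((aa * bb) * ((x - /2) * (x + /2)) + bb * bb * (x - /2) / (4 * (x + 1))) by (field; lra).
  rewrite H0. assert (bb * bb * (x - / 2) / (4 * (x + 1)) <= /4).
  { apply Rle_trans with ((x+1)/(4*(x+1))). unfold Rdiv. apply Rmult_le_compat_r. left; apply Rinv_0_lt_compat; lra. assert (bb*bb < 1) by nra. assert (0 <= x - /2) by lra. nra.
    right; field; lra. }
  nra. Qed.

Definition Ej (j : nat) (x : R) := (x + INR j) / 4 ^ j.

Lemma bound_all j : forall n, (1 <= n)%nat ->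
  Lb (INR n) - Ej j (INR n) <= r n <= Ub (INR n) + Ej j (INR n).
Proof. pose proof bb_bounds as HB. pose proof aa_bb as HA. induction j as [|j IH]; intros n Hn.
  - unfold Ej. simpl. rewrite Rdiv_1_r, Rplus_0_r.
    pose proof (r_gt n Hn). pose proof (r_gt (S n) ltac:(lia)). pose proof (r_rel n Hn).
    rewrite S_INR in H0. assert (1 <= INR n) by (apply (le_INR 1); lia).
    set (x := INR n) in *. set (u := r n) in *. set (v := r (S n)) in *.
    unfold Ub, Lb. assert (0 < bb / (4 * x)) by (apply Rdiv_lt_0_compat; lra). rewrite HA. split; nra.
  - intros. pose proof (r_gt n Hn) as G1. pose proof (r_gt (S n) ltac:(lia)) as G2. pose proof (r_rel n Hn) as RR.
    pose proof (IH (S n) ltac:(lia)) as IHn. rewrite S_INR in *. assert (X1 : 1 <= INR n) by (apply (le_INR 1); lia).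
    set (x := INR n) in *. set (u := r n) in *. set (v := r (S n)) in *.
    assert (EE : Ej (S j) x = Ej j (x + 1) / 4).
    { unfold Ej. rewrite S_INR. simpl pow. field. apply pow_nonzero. lra. }
    rewrite EE. assert (E0 : 0 <= Ej j (x + 1)).
    { unfold Ej. unfold Rdiv. apply Rmult_le_pos. pose proof (pos_INR j). lra. left. apply Rinv_0_lt_compat. apply pow_lt. lra. }
    set (E := Ej j (x + 1)) in *.
    assert (Hv : 0 < v) by lra.
    assert (Pe : u - (2 * x - 1) = x^2 / v) by (rewrite <- RR; field; lra).
    unfold Ub, Lb in *. split.
    + assert (K : (bb * (x - /2) - E / 4) * v <= x^2).
      { pose proof (inv_i x X1).
        apply (key_lower x v (aa * (x + 1 - / 2) + bb / (4 * (x + 1))) (bb * (x - /2)) E); try lra; nra. }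
      assert (bb * (x - /2) - E / 4 <= x^2 / v).
      { apply Rmult_le_reg_r with v; auto. unfold Rdiv. rewrite Rmult_assoc, Rinv_l by lra. lra. }
      rewrite HA in *. lra.
    + assert (K : x^2 <= (bb * (x - /2) + bb / (4 * x) + E / 4) * v).
      { assert (0 < bb / (4 * x)) by (apply Rdiv_lt_0_compat; lra).
        assert (bb / (4 * x) <= bb / 4).
        { unfold Rdiv. apply Rmult_le_compat_l. lra. apply Rinv_le_contravar; lra. }
        pose proof (inv_ii x X1).
        apply (key_upper x v (aa * (x + 1 - / 2)) (bb * (x - /2) + bb / (4 * x)) E); try lra; nra. }
      assert (x^2 / v <= bb * (x - /2) + bb / (4 * x) + E / 4).
      { apply Rmult_le_reg_r with v; auto. unfold Rdiv. rewrite Rmult_assoc, Rinv_l by lra. lra. }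
      rewrite HA in *. lra.
Qed.

From Stdlib Require Import Reals Lra Lia ZArith.
Open Scope R_scope.

Lemma pow4 j : (INR j + 1)^2 <= 4^j.
Proof. induction j. simpl; lra. rewrite S_INR. simpl pow in *. pose proof (pos_INR j). nra. Qed.

Lemma Ej_small j x : 1 <= x -> Ej j x <= (x + 1) / (INR j + 1).
Proof. intro H. unfold Ej. pose proof (pow4 j). pose proof (pos_INR j).
  assert (0 < 4^j) by (apply pow_lt; lra).
  apply Rle_trans with ((x + INR j) / (INR j + 1)^2).
  - unfold Rdiv. apply Rmult_le_compat_l. lra. apply Rinv_le_contravar. nra. auto.
  - unfold Rdiv. apply Rmult_le_reg_r with ((INR j + 1)^2). nra.
    replace ((x + INR j) * / (INR j + 1) ^ 2 * (INR j + 1) ^ 2) with (x + INR j) by (field; lra).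
    replace ((x + 1) * / (INR j + 1) * (INR j + 1) ^ 2) with ((x+1)*(INR j + 1)) by (field; lra). nra. Qed.

Lemma r_bounds n : (1 <= n)%nat -> Lb (INR n) <= r n <= Ub (INR n).
Proof. intro Hn. assert (X : 1 <= INR n) by (apply (le_INR 1); lia). split.
  - destruct (Rle_or_lt (Lb (INR n)) (r n)) as [|H]; auto. exfalso.
    destruct (INR_archimed (Lb (INR n) - r n) (INR n + 1)) as [j Hj]; [lra|].
    destruct (bound_all j n Hn). pose proof (Ej_small j (INR n) X). pose proof (pos_INR j).
    assert ((INR n + 1) / (INR j + 1) < Lb (INR n) - r n).
    { apply Rmult_lt_reg_r with (INR j + 1). lra. unfold Rdiv. rewrite Rmult_assoc, Rinv_l by lra. nra. }
    lra.
  - destruct (Rle_or_lt (r n) (Ub (INR n))) as [|H]; auto. exfalso.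
    destruct (INR_archimed (r n - Ub (INR n)) (INR n + 1)) as [j Hj]; [lra|].
    destruct (bound_all j n Hn). pose proof (Ej_small j (INR n) X). pose proof (pos_INR j).
    assert ((INR n + 1) / (INR j + 1) < r n - Ub (INR n)).
    { apply Rmult_lt_reg_r with (INR j + 1). lra. unfold Rdiv. rewrite Rmult_assoc, Rinv_l by lra. nra. }
    lra. Qed.

Theorem part_e : forall n : nat, (1 <= n)%nat -> e n = d n.
Proof. intros n Hn. rewrite d_eq. unfold e, dz. apply Int_part_unique.
  destruct (r_bounds n Hn) as [B1 B2]. unfold Ub, Lb in *.
  pose proof (G_spec (Z.of_nat n)) as [G1 G2].
  pose proof s2_sq. pose proof s2_pos. pose proof s2_bounds. pose proof bb_bounds.
  assert (X : 1 <= INR n) by (apply (le_INR 1); lia).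
  set (t := tq (Z.of_nat n)) in *.
  assert (Ht : t = s2 * (INR n - /2)).
  { unfold t, tq. rewrite minus_IZR, mult_IZR, <- INR_IZR_INZ. simpl IZR.
    apply (Rmult_eq_reg_r s2); [|lra]. unfold Rdiv. rewrite Rmult_assoc, Rinv_l by lra.
    replace (s2 * (INR n - / 2) * s2) with ((s2 * s2) * (INR n - /2)) by ring. rewrite H. field. }
  assert (HL : aa * (INR n - / 2) + /2 = INR n + t) by (rewrite Ht; unfold aa; field).
  set (G := Gz (Z.of_nat n)) in *. rewrite plus_IZR, <- INR_IZR_INZ. split; [lra|].
  set (g := IZR G + 1) in *.
  assert (Hg : t^2 + /2 <= g^2).
  { assert (Hsq : IZR ((2 * Z.of_nat n - 1) * (2 * Z.of_nat n - 1)) < IZR (2 * (G + 1) * (G + 1))).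
    { rewrite !mult_IZR, minus_IZR, plus_IZR, mult_IZR, <- INR_IZR_INZ. simpl IZR.
      assert (E1 : 2 * INR n - 1 = s2 * t) by (rewrite Ht; replace (s2 * (s2 * (INR n - /2))) with ((s2*s2) * (INR n - /2)) by ring; rewrite H; field).
      rewrite E1. fold g. assert (0 < t) by (rewrite Ht; nra). nra. }
    apply lt_IZR in Hsq. assert (Hsq2 : ((2 * Z.of_nat n - 1) * (2 * Z.of_nat n - 1) + 1 <= 2 * (G + 1) * (G + 1))%Z) by lia.
    apply IZR_le in Hsq2. repeat rewrite ?plus_IZR, ?mult_IZR, ?minus_IZR in Hsq2. rewrite <- INR_IZR_INZ in Hsq2. simpl IZR in Hsq2.
    rewrite Ht. assert (E3 : (s2 * (INR n - /2))^2 = (2 * INR n - 1)^2 / 2).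
    { replace ((s2 * (INR n - /2))^2) with ((s2*s2) * (INR n - /2)^2) by ring. rewrite H. field. }
    rewrite E3. unfold g. nra. }
  assert (Htx : t <= 1.42 * INR n) by (rewrite Ht; nra).
  assert (0 < bb / (4 * INR n)) by (apply Rdiv_lt_0_compat; lra).
  assert (t + bb / (4 * INR n) < g).
  { destruct (Rlt_or_le (t + bb / (4 * INR n)) g) as [|C]; auto. exfalso.
    assert (Cg : (g - t) * (4 * INR n) <= bb).
    { replace bb with (bb / (4 * INR n) * (4 * INR n)) by (field; lra). apply Rmult_le_compat_r; lra. }
    assert (0 < t) by (rewrite Ht; nra).
    nra. }
  unfold g in *. lra. Qed.

Theorem theorem1 :
  (forall f : nat -> Z, a_rec f <-> (forall n : nat, (1 <= n)%nat -> f n = d n)) /\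
  (forall f : nat -> Z, b_rec f <-> (forall n : nat, (1 <= n)%nat -> f n = d n)) /\
  (exists w : nat -> nat, is_fixed_point_limit w) /\
  (forall w : nat -> nat, is_fixed_point_limit w ->
     forall n : nat, (1 <= n)%nat ->
       exists p : nat, nth_zero_pos w n p /\ Z.of_nat p = d n) /\
  (forall n : nat, (1 <= n)%nat -> r n - (2 * INR n - 1) <> 0) /\
  (forall n : nat, (1 <= n)%nat -> e n = d n).
Proof.
  split. exact part_a. split. exact part_b. split. exact part_c. split. exact part_cd.
  split. exact part_e0. exact part_e.
Qed.
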